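(* Let $\tau=\{1-t^2+2it:\ t\in\mathbb{R}\}$ (a parabola). Then: (1) $A\mapsto\zeta_+(A)$ is a conformal mapping of $\mathbb{C}_+=\{\Im A>0\}$ onto the domain in $\mathbb{C}_+$ bounded by the ray $[1,+\infty)$ and by $\tau\cap\mathbb{C}_+$; under this mapping the boundary part $[-1,+\infty)$ corresponds to $[1,+\infty)$ and $(-\infty,-1)$ corresponds to $\tau\cap\mathbb{C}_+$. (2) $A\mapsto\zeta_-(A)$ is a conformal mapping of $\mathbb{C}_+$ onto the domain in $\mathbb{C}$ bounded by the ray $[0,+\infty)$ and by $\tau\cap\mathbb{C}_-$ (where $\mathbb{C}_-=\{\Im z<0\}$); under this mapping the boundary part $(0,+\infty)$ corresponds to itself, the interval $[-1,0]$ corresponds to $[0,1]$, and $(-\infty,0)$ corresponds to $\tau\cap\mathbb{C}_-$. Moreover, the pre-image of the negative real axis $(-\infty,0)$ under $\zeta_-$ is the parabola in the upper $A$-half-plane given parametrically by $\{-t^2+2it:\ t\ge0\}$.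
   Context: For $A$ with $\Im A\ge 0$, $\zeta_\pm(A)=A+2\pm2\sqrt{A+1}=(1\pm\sqrt{A+1})^2$, where $\sqrt{\cdot}$ is the principal branch of the square root. Boundary correspondences are understood in the sense of the continuous extension of the maps to the boundary. *)

(* Defs.v *)
From Stdlib Require Import Reals.
From Coquelicot Require Import Coquelicot.
Open Scope R_scope.

Notation CC := Complex.C.

(* Principal branch of the complex square root:
   Re (Csqrt z) >= 0, and Im (Csqrt z) >= 0 whenever Re (Csqrt z) = 0
   (i.e. arg (Csqrt z) in (-pi/2, pi/2]). *)
Definition Csqrt (z : CC) : CC :=
  let r := Cmod z in
  (sqrt ((r + Re z) / 2),
   (if Rlt_dec (Im z) 0 then -1 else 1) * sqrt ((r - Re z) / 2)).

Definition zeta_plus (A : CC) : CC :=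
  Cplus (Cplus A (RtoC 2)) (Cmult (RtoC 2) (Csqrt (Cplus A (RtoC 1)))).
Definition zeta_minus (A : CC) : CC :=
  Cminus (Cplus A (RtoC 2)) (Cmult (RtoC 2) (Csqrt (Cplus A (RtoC 1)))).

Definition tau (z : CC) : Prop := exists t : R, z = (1 - t ^ 2, 2 * t).

Definition Cupper (z : CC) : Prop := 0 < Im z.
Definition Cupper_closed (z : CC) : Prop := 0 <= Im z.
Definition Clower (z : CC) : Prop := Im z < 0.

Definition holomorphic_on (U : CC -> Prop) (f : CC -> CC) : Prop :=
  forall z, U z -> @ex_derive C_AbsRing C_NormedModule f z.

Definition bij_onto (f : CC -> CC) (S T : CC -> Prop) : Prop :=
  (forall z, S z -> T (f z)) /\
  (forall w, T w -> exists z, S z /\ f z = w) /\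
  (forall z1 z2, S z1 -> S z2 -> f z1 = f z2 -> z1 = z2).

(* Conformal mapping of U onto D: a holomorphic bijection of U onto D
   (its inverse is then automatically holomorphic). *)
Definition conformal_onto (f : CC -> CC) (U D : CC -> Prop) : Prop :=
  holomorphic_on U f /\ bij_onto f U D.

(* f (defined on the closed upper half-plane) is continuous there, i.e. it is
   the continuous extension to the boundary of its restriction to C_+. *)
Definition continuous_on_closed_upper (f : CC -> CC) : Prop :=
  forall z, Cupper_closed z ->
    filterlim f (within Cupper_closed (locally z)) (locally (f z)).

Definition real_set (P : R -> Prop) (z : CC) : Prop := Im z = 0 /\ P (Re z).

(* Domain in C_+ bounded by the ray [1,+oo) and tau /\ C_+ :
   the points of C_+ lying to the right of the parabola
   tau = { x + i y : x = 1 - y^2/4 }. *)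
Definition D_plus (z : CC) : Prop :=
  0 < Im z /\ 1 - (Im z) ^ 2 / 4 < Re z.

(* Domain in C bounded by the ray [0,+oo) and tau /\ C_- :
   C minus ( [0,+oo) union the closed region of C_- to the right of tau ). *)
Definition D_minus (z : CC) : Prop :=
  ~ (Im z = 0 /\ 0 <= Re z) /\
  ~ (Im z < 0 /\ 1 - (Im z) ^ 2 / 4 <= Re z).

(* Main.v *)
Require Import Defs.
From Stdlib Require Import Reals.
From Coquelicot Require Import Coquelicot.
From Stdlib Require Import Lra Psatz.
Open Scope R_scope.

Lemma sqrt_fact x y : let r := sqrt (x^2+y^2) in
  0 <= (r + x)/2 /\ 0 <= (r - x)/2 /\ r*r = x^2+y^2.
Proof.
  intro r. assert (H0: 0 <= x^2+y^2) by nra.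
  assert (Hr: r*r = x^2+y^2) by (apply sqrt_sqrt; auto).
  assert (Hr0: 0 <= r) by apply sqrt_pos.
  assert (r*r >= x*x) by nra.
  split; [|split]; auto; nra.
Qed.

Lemma Csqrt_comp w : let s := Csqrt w in
  fst s * fst s - snd s * snd s = fst w /\ 2 * fst s * snd s = snd w /\
  0 <= fst s /\ (0 <= snd w -> 0 <= snd s).
Proof.
  destruct w as [x y]. unfold Csqrt, Cmod, Re, Im; cbn [fst snd].
  destruct (sqrt_fact x y) as (Hu & Hv & Hr).
  set (r := sqrt (x^2+y^2)) in *.
  set (u := (r + x)/2) in *. set (v := (r-x)/2) in *.
  assert (Su : sqrt u * sqrt u = u) by (apply sqrt_sqrt; auto).
  assert (Sv : sqrt v * sqrt v = v) by (apply sqrt_sqrt; auto).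
  assert (Pu := sqrt_pos u). assert (Pv := sqrt_pos v).
  assert (HP : (sqrt u * sqrt v)^2 = (y/2)^2).
  { replace ((sqrt u * sqrt v)^2) with ((sqrt u * sqrt u) * (sqrt v * sqrt v)) by ring.
    rewrite Su, Sv. unfold u, v. nra. }
  assert (HP0 : 0 <= sqrt u * sqrt v) by nra.
  assert (Huv : u - v = x) by (unfold u, v; lra). clearbody u v r.
  cbv zeta. cbn [fst snd].
  assert (Hc : sqrt u * sqrt v = Rabs y / 2).
  { assert (H0: (sqrt u * sqrt v - Rabs y/2) * (sqrt u * sqrt v + Rabs y/2) = 0).
    { assert (Rabs y * Rabs y = y * y) by (rewrite <- Rabs_mult; apply Rabs_pos_eq; nra). nra. }
    assert (Ry := Rabs_pos y).
    apply Rmult_integral in H0; lra. }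
  destruct (Rlt_dec y 0) as [Hy|Hy];
    [rewrite Rabs_left in Hc by lra | rewrite Rabs_right in Hc by lra];
    (split; [|split; [|split]]); intros; nra.
Qed.

Lemma Csqrt_sq w : Cmult (Csqrt w) (Csqrt w) = w.
Proof.
  destruct (Csqrt_comp w) as (H1 & H2 & _).
  destruct (Csqrt w) as [a b]. destruct w as [x y]. simpl in *.
  unfold Cmult; simpl. f_equal; lra.
Qed.

Lemma Csqrt_re w : 0 <= fst (Csqrt w).
Proof. apply (Csqrt_comp w). Qed.

Lemma Csqrt_im w : 0 <= snd w -> 0 <= snd (Csqrt w).
Proof. apply (Csqrt_comp w). Qed.

Lemma sq_uniq p q a b : 0 <= p -> 0 <= q -> 0 <= a -> 0 <= b ->
  p*p - q*q = a*a - b*b -> p*q = a*b -> p = a /\ q = b.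
Proof.
  intros.
  assert (E: (p*p+q*q)*(p*p+q*q) = (a*a+b*b)*(a*a+b*b)).
  { replace ((p*p+q*q)*(p*p+q*q)) with ((p*p-q*q)*(p*p-q*q) + 4*(p*q)*(p*q)) by ring.
    rewrite H3, H4. ring. }
  assert (E2: p*p+q*q = a*a+b*b).
  { assert (((p*p+q*q) - (a*a+b*b)) * ((p*p+q*q) + (a*a+b*b)) = 0) by nra.
    apply Rmult_integral in H5. destruct H5; [lra|].
    nra. }
  assert (pa: p*p = a*a) by lra. assert (qb: q*q = b*b) by lra.
  split; nra.
Qed.

Lemma Csqrt_unique a b : 0 <= a -> 0 <= b -> Csqrt (a*a - b*b, 2*a*b) = (a,b).
Proof.
  intros Ha Hb.
  destruct (Csqrt_comp (a*a - b*b, 2*a*b)) as (H1 & H2 & H3 & H4).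
  destruct (Csqrt (a*a - b*b, 2*a*b)) as [p q]. simpl in *.
  assert (0 <= q) by (apply H4; nra).
  destruct (sq_uniq p q a b) as [-> ->]; auto; lra.
Qed.

Lemma param A : 0 <= snd A -> exists a b, 0 <= a /\ 0 <= b /\ A = (a*a-b*b-1, 2*a*b).
Proof.
  intros H.
  destruct (Csqrt_comp (Cplus A (RtoC 1))) as (H1 & H2 & H3 & H4).
  destruct (Csqrt (Cplus A (RtoC 1))) as [a b]. destruct A as [x y]. simpl in *.
  exists a, b. split; [|split]; auto. apply H4; lra.
  f_equal; lra.
Qed.

Lemma zp_ab a b : 0 <= a -> 0 <= b ->
  zeta_plus (a*a-b*b-1, 2*a*b) = ((1+a)*(1+a) - b*b, 2*(1+a)*b).
Proof.
  intros Ha Hb. unfold zeta_plus.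
  replace (Cplus (a*a-b*b-1, 2*a*b) (RtoC 1)) with ((a*a - b*b, 2*a*b) : CC)
    by (unfold Cplus, RtoC; simpl; f_equal; ring).
  rewrite Csqrt_unique by auto.
  unfold Cplus, Cmult, RtoC; simpl; f_equal; ring.
Qed.

Lemma zm_ab a b : 0 <= a -> 0 <= b ->
  zeta_minus (a*a-b*b-1, 2*a*b) = ((a-1)*(a-1) - b*b, 2*(a-1)*b).
Proof.
  intros Ha Hb. unfold zeta_minus.
  replace (Cplus (a*a-b*b-1, 2*a*b) (RtoC 1)) with ((a*a - b*b, 2*a*b) : CC)
    by (unfold Cplus, RtoC; simpl; f_equal; ring).
  rewrite Csqrt_unique by auto.
  unfold Cminus, Copp, Cplus, Cmult, RtoC; simpl; f_equal; ring.
Qed.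

Lemma sq_inj2 p1 q1 p2 q2 : p1*p1 - q1*q1 = p2*p2 - q2*q2 -> p1*q1 = p2*q2 ->
  ((0 < p1 /\ 0 < p2) \/ (0 < q1 /\ 0 < q2)) -> p1 = p2 /\ q1 = q2.
Proof.
  intros H3 H4 H5.
  assert (E: (p1*p1+q1*q1)*(p1*p1+q1*q1) = (p2*p2+q2*q2)*(p2*p2+q2*q2)).
  { replace ((p1*p1+q1*q1)*(p1*p1+q1*q1)) with ((p1*p1-q1*q1)*(p1*p1-q1*q1) + 4*(p1*q1)*(p1*q1)) by ring.
    rewrite H3, H4. ring. }
  assert (E2: p1*p1+q1*q1 = p2*p2+q2*q2).
  { assert (((p1*p1+q1*q1) - (p2*p2+q2*q2)) * ((p1*p1+q1*q1) + (p2*p2+q2*q2)) = 0) by nra.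
    apply Rmult_integral in H. destruct H; [lra|].
    nra. }
  assert (pa: p1*p1 = p2*p2) by lra. assert (qb: q1*q1 = q2*q2) by lra.
  destruct H5 as [[]|[]].
  - assert (p1 = p2) by nra. subst. split; auto.
    apply Rmult_eq_reg_l with p2; lra.
  - assert (q1 = q2) by nra. subst. split; auto.
    apply Rmult_eq_reg_r with q2; lra.
Qed.

Lemma zp_inj z1 z2 : 0 <= snd z1 -> 0 <= snd z2 -> zeta_plus z1 = zeta_plus z2 -> z1 = z2.
Proof.
  intros H1 H2 E.
  destruct (param z1 H1) as (a1&b1&Ha1&Hb1&->).
  destruct (param z2 H2) as (a2&b2&Ha2&Hb2&->).
  rewrite !zp_ab in E by auto. injection E as E1 E2.
  destruct (sq_inj2 (1+a1) b1 (1+a2) b2) as [e1 e2]; [lra|lra|left; lra|].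
  assert (a1 = a2) by lra. subst. reflexivity.
Qed.

Lemma P1_map z : Cupper z -> D_plus (zeta_plus z).
Proof.
  unfold Cupper, Im. intros Hz.
  destruct (param z) as (a&b&Ha&Hb&->); [lra|]. simpl in Hz.
  rewrite zp_ab by auto. unfold D_plus, Re, Im; simpl.
  assert (0 < a) by (destruct Ha; [auto| subst; lra]).
  assert (0 < b) by (destruct Hb; [auto| subst; lra]).
  split; [nra|].
  assert ((1 - (1+a)*(1+a)) * (1 + b*b) < 0) by nra. nra.
Qed.

Lemma P1_onto w : D_plus w -> exists z, Cupper z /\ zeta_plus z = w.
Proof.
  destruct w as [x y]. unfold D_plus, Re, Im; simpl. intros [Hy Hx].
  destruct (Csqrt_comp (x,y)) as (H1 & H2 & H3 & H4).
  destruct (Csqrt (x,y)) as [p q]. simpl in *.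
  assert (Hq := H4 (Rlt_le _ _ Hy)).
  assert (0 < p) by (destruct H3; [auto|subst; lra]).
  assert (0 < q) by (destruct Hq; [auto|subst; lra]).
  assert ((1 - p*p) * (1 + q*q) < 0) by nra.
  assert (1 - p*p < 0).
  { destruct (Rlt_or_le (1 - p*p) 0); auto.
    assert (0 <= (1 - p*p) * (1 + q*q)) by (apply Rmult_le_pos; nra). lra. }
  assert (1 < p) by nra.
  exists ((p-1)*(p-1) - q*q - 1, 2*(p-1)*q). split.
  - unfold Cupper, Im; simpl; nra.
  - rewrite zp_ab by lra. f_equal; nra.
Qed.

Lemma real_param z P : real_set P z -> exists a b, 0 <= a /\ 0 <= b /\
  z = (a*a-b*b-1, 2*a*b) /\ a * b = 0 /\ P (a*a-b*b-1).
Proof.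
  unfold real_set, Re, Im. intros [H0 HP].
  destruct (param z) as (a&b&Ha&Hb&->); [lra|]. simpl in *.
  exists a, b; repeat split; auto; lra.
Qed.

Lemma P1_real : bij_onto zeta_plus (real_set (fun x => -1 <= x)) (real_set (fun x => 1 <= x)).
Proof.
  split; [|split].
  - intros z Hz. destruct (real_param _ _ Hz) as (a&b&Ha&Hb&->&Hab&HP).
    assert (b = 0).
    { destruct Hb as [Hb|]; auto. assert (a = 0) by nra. subst. nra. }
    subst. rewrite zp_ab by lra. unfold real_set, Re, Im; simpl. split; nra.
  - intros [x y]. unfold real_set, Re, Im; simpl. intros [-> Hx].
    assert (S1: 1 <= sqrt x) by (rewrite <- sqrt_1; apply sqrt_le_1_alt; lra).
    assert (S2: sqrt x * sqrt x = x) by (apply sqrt_sqrt; lra).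
    exists ((sqrt x - 1)*(sqrt x - 1) - 0*0 - 1, 2*(sqrt x - 1)*0).
    split. unfold real_set, Re, Im; simpl; split; nra.
    rewrite zp_ab by lra. f_equal; nra.
  - intros z1 z2 [H1 _] [H2 _]. apply zp_inj; unfold Im in *; lra.
Qed.

Lemma P1_neg : bij_onto zeta_plus (real_set (fun x => x < -1)) (fun z => tau z /\ Cupper z).
Proof.
  split; [|split].
  - intros z Hz. destruct (real_param _ _ Hz) as (a&b&Ha&Hb&->&Hab&HP).
    assert (0 < b) by nra. assert (a = 0) by nra. subst.
    rewrite zp_ab by lra. unfold tau, Cupper, Im; simpl. split.
    + exists b. f_equal; ring.
    + nra.
  - intros w [[t ->] Hw]. unfold Cupper, Im in Hw; simpl in Hw.
    exists (0*0 - t*t - 1, 2*0*t). split.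
    + unfold real_set, Re, Im; simpl; split; nra.
    + rewrite zp_ab by lra. f_equal; ring.
  - intros z1 z2 [H1 _] [H2 _]. apply zp_inj; unfold Im in *; lra.
Qed.

Lemma zm_inj_gen a1 b1 a2 b2 : 0 <= a1 -> 0 <= b1 -> 0 <= a2 -> 0 <= b2 ->
  ((0 < a1 - 1 /\ 0 < a2 - 1) \/ (0 < b1 /\ 0 < b2)) ->
  zeta_minus (a1*a1-b1*b1-1, 2*a1*b1) = zeta_minus (a2*a2-b2*b2-1, 2*a2*b2) ->
  (a1*a1-b1*b1-1, 2*a1*b1) = (a2*a2-b2*b2-1, 2*a2*b2) :> CC.
Proof.
  intros Ha1 Hb1 Ha2 Hb2 Hc E.
  rewrite !zm_ab in E by auto. injection E as E1 E2.
  destruct (sq_inj2 (a1-1) b1 (a2-1) b2) as [e1 e2]; [lra|lra|lra|].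
  assert (a1 = a2) by lra. subst. reflexivity.
Qed.

Lemma P2_map z : Cupper z -> D_minus (zeta_minus z).
Proof.
  unfold Cupper, Im. intros Hz.
  destruct (param z) as (a&b&Ha&Hb&->); [lra|]. simpl in Hz.
  assert (0 < a) by (destruct Ha; [auto| subst; lra]).
  assert (0 < b) by (destruct Hb; [auto| subst; lra]).
  rewrite zm_ab by auto. unfold D_minus, Re, Im; simpl. split.
  - intros [H1 H2]. assert (a = 1) by nra. subst. nra.
  - intros [H1 H2]. assert (a < 1) by nra.
    assert (0 < (1 - (a-1)*(a-1)) * (1 + b*b)) by (apply Rmult_lt_0_compat; nra).
    nra.
Qed.

Lemma P2_onto w : D_minus w -> exists z, Cupper z /\ zeta_minus z = w.
Proof.
  destruct w as [x y]. unfold D_minus, Re, Im; simpl. intros [N1 N2].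
  destruct (Csqrt_comp (x,y)) as (H1 & H2 & H3 & H4).
  destruct (Csqrt (x,y)) as [p q]. simpl in *.
  destruct (Rtotal_order y 0) as [Hy|[Hy|Hy]].
  - assert (0 < p) by (destruct H3 as [|<-]; [auto|lra]). assert (q < 0) by nra.
    assert (0 < (1 - p*p) * (1 + q*q)).
    { destruct (Rlt_or_le 0 ((1 - p*p) * (1 + q*q))); auto. exfalso. apply N2. split; auto. nra. }
    assert (1 - p*p > 0).
    { destruct (Rlt_or_le 0 (1 - p*p)); auto. 
      assert ((1 - p*p) * (1 + q*q) <= 0) by (apply Rmult_le_0_r; nra). lra. }
    assert (p < 1) by nra.
    exists ((1-p)*(1-p) - (-q)*(-q) - 1, 2*(1-p)*(-q)). split.
    + unfold Cupper, Im; simpl; nra.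
    + rewrite zm_ab by lra. f_equal; nra.
  - rewrite Hy in *. assert (x < 0) by (destruct (Rlt_or_le x 0); auto; exfalso; apply N1; auto).
    assert (Hp0 : p = 0) by nra. rewrite Hp0 in *. assert (0 < q) by nra.
    exists (1*1 - q*q - 1, 2*1*q). split.
    + unfold Cupper, Im; simpl; nra.
    + rewrite zm_ab by lra. f_equal; nra.
  - assert (Hq := H4 (Rlt_le _ _ Hy)).
    assert (0 < p) by (destruct H3 as [|<-]; [auto|lra]).
    assert (0 < q) by (destruct Hq as [|<-]; [auto|lra]).
    exists ((p+1)*(p+1) - q*q - 1, 2*(p+1)*q). split.
    + unfold Cupper, Im; simpl; nra.
    + rewrite zm_ab by lra. f_equal; nra.
Qed.

Lemma P2_inj_upper z1 z2 : Cupper z1 -> Cupper z2 -> zeta_minus z1 = zeta_minus z2 -> z1 = z2.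
Proof.
  unfold Cupper, Im. intros H1 H2.
  destruct (param z1) as (a1&b1&Ha1&Hb1&->); [lra|].
  destruct (param z2) as (a2&b2&Ha2&Hb2&->); [lra|]. simpl in *.
  apply zm_inj_gen; auto. right; split; nra.
Qed.

Lemma P2_pos : bij_onto zeta_minus (real_set (fun x => 0 < x)) (real_set (fun x => 0 < x)).
Proof.
  split; [|split].
  - intros z Hz. destruct (real_param _ _ Hz) as (a&b&Ha&Hb&->&Hab&HP).
    assert (b = 0).
    { destruct Hb as [Hb|]; auto. assert (a = 0) by nra. subst. nra. }
    subst. assert (1 < a) by nra.
    rewrite zm_ab by lra. unfold real_set, Re, Im; simpl. split; nra.
  - intros [x y]. unfold real_set, Re, Im; simpl. intros [-> Hx].
    assert (S1: 0 < sqrt x) by (apply sqrt_lt_R0; lra).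
    assert (S2: sqrt x * sqrt x = x) by (apply sqrt_sqrt; lra).
    exists ((sqrt x + 1)*(sqrt x + 1) - 0*0 - 1, 2*(sqrt x + 1)*0).
    split. unfold real_set, Re, Im; simpl; split; nra.
    rewrite zm_ab by lra. f_equal; nra.
  - intros z1 z2 H1 H2 E.
    destruct (real_param _ _ H1) as (a1&b1&Ha1&Hb1&->&Hab1&HP1).
    destruct (real_param _ _ H2) as (a2&b2&Ha2&Hb2&->&Hab2&HP2).
    assert (b1 = 0).
    { destruct Hb1 as [Hb|]; auto. assert (a1 = 0) by nra. subst. nra. }
    assert (b2 = 0).
    { destruct Hb2 as [Hb|]; auto. assert (a2 = 0) by nra. subst. nra. }
    subst. apply zm_inj_gen; auto. left; split; nra.
Qed.

Lemma P2_mid : bij_onto zeta_minus (real_set (fun x => -1 <= x <= 0))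
                       (real_set (fun x => 0 <= x <= 1)).
Proof.
  split; [|split].
  - intros z Hz. destruct (real_param _ _ Hz) as (a&b&Ha&Hb&->&Hab&HP).
    assert (b = 0).
    { destruct Hb as [Hb|]; auto. assert (a = 0) by nra. subst. nra. }
    subst. assert (a <= 1) by nra.
    rewrite zm_ab by lra. unfold real_set, Re, Im; simpl. split; [|split]; nra.
  - intros [x y]. unfold real_set, Re, Im; simpl. intros [-> Hx].
    assert (S1: sqrt x <= 1) by (rewrite <- sqrt_1; apply sqrt_le_1_alt; lra).
    assert (S0 := sqrt_pos x).
    assert (S2: sqrt x * sqrt x = x) by (apply sqrt_sqrt; lra).
    exists ((1 - sqrt x)*(1 - sqrt x) - 0*0 - 1, 2*(1 - sqrt x)*0).
    split. unfold real_set, Re, Im; simpl; split; [|split]; nra.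
    rewrite zm_ab by lra. f_equal; nra.
  - intros z1 z2 H1 H2 E.
    destruct (real_param _ _ H1) as (a1&b1&Ha1&Hb1&->&Hab1&HP1).
    destruct (real_param _ _ H2) as (a2&b2&Ha2&Hb2&->&Hab2&HP2).
    assert (b1 = 0).
    { destruct Hb1 as [Hb|]; auto. assert (a1 = 0) by nra. subst. nra. }
    assert (b2 = 0).
    { destruct Hb2 as [Hb|]; auto. assert (a2 = 0) by nra. subst. nra. }
    subst. rewrite !zm_ab in E by lra. injection E as E1 E2.
    assert (a1 <= 1) by nra. assert (a2 <= 1) by nra.
    assert (Hm: (a1 - a2) * (a1 + a2 - 2) = 0) by nra.
    apply Rmult_integral in Hm.
    assert (a1 = a2) by (destruct Hm; nra). subst. reflexivity.
Qed.

Lemma P2_neg : bij_onto zeta_minus (real_set (fun x => x < -1)) (fun z => tau z /\ Clower z).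
Proof.
  split; [|split].
  - intros z Hz. destruct (real_param _ _ Hz) as (a&b&Ha&Hb&->&Hab&HP).
    assert (0 < b) by nra. assert (a = 0) by nra. subst.
    rewrite zm_ab by lra. unfold tau, Clower, Im; simpl. split.
    + exists (-b). f_equal; ring.
    + nra.
  - intros w [[t ->] Hw]. unfold Clower, Im in Hw; simpl in Hw.
    exists (0*0 - (-t)*(-t) - 1, 2*0*(-t)). split.
    + unfold real_set, Re, Im; simpl; split; nra.
    + rewrite zm_ab by lra. f_equal; ring.
  - intros z1 z2 H1 H2 E.
    destruct (real_param _ _ H1) as (a1&b1&Ha1&Hb1&->&Hab1&HP1).
    destruct (real_param _ _ H2) as (a2&b2&Ha2&Hb2&->&Hab2&HP2).
    apply zm_inj_gen; auto. right; split; nra.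
Qed.

Lemma P2_last : forall A : CC, Cupper_closed A ->
      (real_set (fun x => x < 0) (zeta_minus A) <->
       exists t : R, 0 < t /\ A = (- t ^ 2, 2 * t)).
Proof.
  intros A HA. unfold Cupper_closed, Im in HA.
  split.
  - destruct (param A HA) as (a&b&Ha&Hb&->).
    rewrite zm_ab by auto. unfold real_set, Re, Im; simpl. intros [H1 H2].
    assert (0 < b) by (destruct Hb as [|<-]; [auto|pose proof (Rle_0_sqr (a-1)); unfold Rsqr in *; lra]).
    assert (Hm : (a - 1) * b = 0) by lra. apply Rmult_integral in Hm.
    assert (a = 1) by (destruct Hm; lra). subst.
    exists b. split; auto. f_equal; ring.
  - intros (t & Ht & ->).
    replace ((- t ^ 2, 2 * t) : CC) with ((1*1 - t*t - 1, 2*1*t) : CC) by (f_equal; ring).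
    rewrite zm_ab by lra. unfold real_set, Re, Im; simpl. split; nra.
Qed.

Lemma deriv_bound (f : CC -> CC) x l :
  (forall eps : posreal, exists d : posreal, forall y,
     Cmod (Cminus y x) < d -> Cmod (Cminus (Cminus (f y) (f x)) (Cmult (Cminus y x) l)) <= eps * Cmod (Cminus y x)) ->
  @is_derive C_AbsRing C_NormedModule f x l.
Proof.
  intros H. split.
  - apply is_linear_scal_l.
  - intros x0 Hx0. apply (@is_filter_lim_locally_unique C_AbsRing (AbsRing_NormedModule C_AbsRing)) in Hx0. subst x0.
    intros eps. apply (@locally_le_locally_norm C_AbsRing (AbsRing_NormedModule C_AbsRing)).
    destruct (H eps) as [d Hd]. exists d. intros y Hy. apply Hd. exact Hy.
Qed.

Lemma cont_lemma (f : CC -> CC) z :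
  (forall y, Cupper_closed y -> Cmod (Cminus (f y) (f z)) <= Cmod (Cminus y z) + 2 * sqrt (Cmod (Cminus y z))) ->
  filterlim f (within Cupper_closed (locally z)) (locally (f z)).
Proof.
  intros H. apply filterlim_locally. intros eps.
  unfold within. apply (@locally_le_locally_norm C_AbsRing C_NormedModule).
  assert (He : 0 < Rmin 1 ((eps/3)*(eps/3))).
  { apply Rmin_pos; [lra|]. destruct eps as [e He]; simpl. nra. }
  exists (mkposreal _ He). intros y Hy Py.
  apply (@norm_compat1 C_AbsRing C_NormedModule).
  unfold ball_norm in Hy. simpl in Hy.
  change (Cmod (Cminus (f y) (f z)) < eps).
  change (Cmod (Cminus y z) < Rmin 1 (eps / 3 * (eps / 3))) in Hy.
  set (d := Cmod (Cminus y z)) in *.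
  assert (d0 : 0 <= d) by apply Cmod_ge_0.
  assert (d1 : d < 1) by (eapply Rlt_le_trans; [apply Hy| apply Rmin_l]).
  assert (d2 : d < eps/3*(eps/3)) by (eapply Rlt_le_trans; [apply Hy| apply Rmin_r]).
  assert (Ss : sqrt d * sqrt d = d) by (apply sqrt_sqrt; auto).
  assert (S0 := sqrt_pos d).
  assert (eps0 := cond_pos eps).
  assert (sqrt d < eps/3) by nra.
  assert (sqrt d < 1) by nra.
  assert (d <= sqrt d) by nra.
  specialize (H y Py). fold d in H. lra.
Qed.

Lemma Cmod_sub_le_add a b c d : 0 <= a -> 0 <= b -> 0 <= c -> 0 <= d ->
  Cmod (Cminus (a,b) (c,d)) <= Cmod (Cplus (a,b) (c,d)).
Proof.
  intros. unfold Cmod, Cminus, Cplus, Copp; simpl. apply sqrt_le_1_alt. nra.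
Qed.

Lemma sqrt_hold w1 w2 : 0 <= snd w1 -> 0 <= snd w2 ->
  Cmod (Cminus (Csqrt w1) (Csqrt w2)) <= sqrt (Cmod (Cminus w1 w2)).
Proof.
  intros H1 H2.
  pose proof (Csqrt_sq w1) as E1. pose proof (Csqrt_sq w2) as E2.
  pose proof (Csqrt_re w1) as R1. pose proof (Csqrt_re w2) as R2.
  pose proof (Csqrt_im w1 H1) as I1. pose proof (Csqrt_im w2 H2) as I2.
  remember (Csqrt w1) as s1. remember (Csqrt w2) as s2.
  clear Heqs1 Heqs2.
  assert (E : Cminus w1 w2 = Cmult (Cminus s1 s2) (Cplus s1 s2)).
  { rewrite <- E1, <- E2. ring. }
  rewrite E, Cmod_mult.
  assert (M : Cmod (Cminus s1 s2) <= Cmod (Cplus s1 s2)).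
  { destruct s1, s2; simpl in *; apply Cmod_sub_le_add; auto. }
  assert (m0 := Cmod_ge_0 (Cminus s1 s2)).
  rewrite <- (sqrt_square (Cmod (Cminus s1 s2))) at 1 by auto.
  apply sqrt_le_1_alt. nra.
Qed.

Lemma deriv_gen (g : CC -> CC) (sg : CC) (x : CC) : Cmod sg = 1 ->
  (forall y, g y = Cplus (Cplus y (RtoC 2)) (Cmult sg (Cmult (RtoC 2) (Csqrt (Cplus y (RtoC 1)))))) ->
  0 < snd x ->
  @is_derive C_AbsRing C_NormedModule g x (Cplus (RtoC 1) (Cdiv sg (Csqrt (Cplus x (RtoC 1))))).
Proof.
  intros Hsg Hg Hx. apply deriv_bound.
  pose proof (Csqrt_comp (Cplus x (RtoC 1))) as (_ & Hs2 & Hs3 & _).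
  pose proof (Csqrt_sq (Cplus x (RtoC 1))) as Es.
  remember (Csqrt (Cplus x (RtoC 1))) as s.
  assert (Hr : 0 < fst s).
  { destruct Hs3 as [|Hs3]; auto. rewrite <- Hs3 in Hs2. simpl in Hs2. lra. }
  set (r := fst s) in *.
  assert (Hc : r <= Cmod s).
  { pose proof (re_le_Cmod s). unfold Re in H. fold r in H. rewrite Rabs_pos_eq in H; lra. }
  assert (sn0 : s <> RtoC 0).
  { intro e. unfold r in Hr. rewrite e in Hr. simpl in Hr. lra. }
  intros eps.
  assert (Hd : 0 < eps * (r*r*r)) by (apply Rmult_lt_0_compat; [apply cond_pos| repeat apply Rmult_lt_0_compat; lra]).
  exists (mkposreal _ Hd). intros y Hy. change (Cmod (Cminus y x) < eps * (r*r*r)) in Hy.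
  pose proof (Csqrt_sq (Cplus y (RtoC 1))) as Et.
  pose proof (Csqrt_re (Cplus y (RtoC 1))) as Rt.
  rewrite !Hg. rewrite <- Heqs.
  remember (Csqrt (Cplus y (RtoC 1))) as t.
  assert (Ey : y = Cminus (Cmult t t) (RtoC 1)) by (rewrite Et; ring).
  assert (Ex : x = Cminus (Cmult s s) (RtoC 1)) by (rewrite Es; ring).
  assert (D : Cminus y x = Cmult (Cminus t s) (Cplus t s)) by (rewrite Ey, Ex; ring).
  assert (EE : Cminus (Cminus (Cplus (Cplus y (RtoC 2)) (Cmult sg (Cmult (RtoC 2) t)))
                              (Cplus (Cplus x (RtoC 2)) (Cmult sg (Cmult (RtoC 2) s))))
                      (Cmult (Cminus y x) (Cplus (RtoC 1) (Cdiv sg s)))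
             = Cdiv (Copp (Cmult sg (Cmult (Cminus t s) (Cminus t s)))) s).
  { rewrite Ey, Ex. field. exact sn0. }
  rewrite EE, D. clear EE.
  rewrite Cmod_div by exact sn0. rewrite Cmod_opp, !Cmod_mult, Hsg.
  rewrite D, Cmod_mult in Hy.
  set (m := Cmod (Cminus t s)) in *. set (M := Cmod (Cplus t s)) in *.
  set (c := Cmod s) in *.
  assert (HM : r <= M).
  { unfold M. pose proof (re_le_Cmod (Cplus t s)). unfold Re in H.
    assert (F : fst (Cplus t s) = fst t + r) by reflexivity.
    rewrite F in H. rewrite Rabs_pos_eq in H; lra. }
  assert (m0 : 0 <= m) by apply Cmod_ge_0.
  assert (e0 := cond_pos eps).
  unfold Rdiv. rewrite Rmult_1_l.
  apply (Rmult_le_reg_r c); [lra|].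
  rewrite Rmult_assoc, Rinv_l by lra.
  assert (m * M <= eps * (r*r*r)) by lra.
  assert (m * r <= m * M) by nra.
  assert (m * r <= eps * (r*r*r)) by lra.
  assert (m <= eps * (r*r)) by nra.
  assert (m * m <= eps * (r * r) * m) by nra.
  assert (eps * (r*r) * m <= eps * (m * M) * c).
  { assert (r*r*m <= m*M*c).
    { assert (r * r <= M * c) by nra. nra. }
    nra. }
  lra.
Qed.

Lemma cont_gen (g : CC -> CC) (sg : CC) : Cmod sg = 1 ->
  (forall y, g y = Cplus (Cplus y (RtoC 2)) (Cmult sg (Cmult (RtoC 2) (Csqrt (Cplus y (RtoC 1)))))) ->
  continuous_on_closed_upper g.
Proof.
  intros Hsg Hg z Hz. apply cont_lemma. intros y Hy.
  unfold Cupper_closed, Im in *.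
  assert (E : Cminus (g y) (g z) = Cplus (Cminus y z) (Cmult sg (Cmult (RtoC 2)
        (Cminus (Csqrt (Cplus y (RtoC 1))) (Csqrt (Cplus z (RtoC 1))))))).
  { rewrite !Hg. ring. }
  rewrite E.
  eapply Rle_trans; [apply Cmod_triangle|].
  rewrite !Cmod_mult, Hsg, Cmod_R, Rabs_pos_eq by lra.
  assert (H := sqrt_hold (Cplus y (RtoC 1)) (Cplus z (RtoC 1))).
  replace (Cminus (Cplus y (RtoC 1)) (Cplus z (RtoC 1))) with (Cminus y z) in H by ring.
  assert (H' : Cmod (Cminus (Csqrt (Cplus y (RtoC 1))) (Csqrt (Cplus z (RtoC 1)))) <= sqrt (Cmod (Cminus y z))).
  { apply H; simpl; lra. }
  lra.
Qed.

Lemma zp_form y : zeta_plus y = Cplus (Cplus y (RtoC 2)) (Cmult (RtoC 1) (Cmult (RtoC 2) (Csqrt (Cplus y (RtoC 1))))).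
Proof. unfold zeta_plus. ring. Qed.

Lemma zm_form y : zeta_minus y = Cplus (Cplus y (RtoC 2)) (Cmult (RtoC (-1)) (Cmult (RtoC 2) (Csqrt (Cplus y (RtoC 1))))).
Proof. unfold zeta_minus. replace (RtoC (-1)) with (Copp (RtoC 1)) by (unfold RtoC, Copp; simpl; f_equal; ring). ring. Qed.

Lemma Cmod_one : Cmod (RtoC 1) = 1.
Proof. rewrite Cmod_R. apply Rabs_pos_eq. lra. Qed.
Lemma Cmod_mone : Cmod (RtoC (-1)) = 1.
Proof. rewrite Cmod_R. rewrite Rabs_left by lra. lra. Qed.

Theorem lemma2p2 :
  (* (1) *)
  (conformal_onto zeta_plus Cupper D_plus /\
   continuous_on_closed_upper zeta_plus /\
   bij_onto zeta_plus (real_set (fun x => -1 <= x)) (real_set (fun x => 1 <= x)) /\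
   bij_onto zeta_plus (real_set (fun x => x < -1)) (fun z => tau z /\ Cupper z))
  /\
  (* (2) *)
  (conformal_onto zeta_minus Cupper D_minus /\
   continuous_on_closed_upper zeta_minus /\
   bij_onto zeta_minus (real_set (fun x => 0 < x)) (real_set (fun x => 0 < x)) /\
   bij_onto zeta_minus (real_set (fun x => -1 <= x <= 0))
                       (real_set (fun x => 0 <= x <= 1)) /\
   bij_onto zeta_minus (real_set (fun x => x < -1)) (fun z => tau z /\ Clower z) /\
   (forall A : CC, Cupper_closed A ->
      (real_set (fun x => x < 0) (zeta_minus A) <->
       exists t : R, 0 < t /\ A = (- t ^ 2, 2 * t)))).
Proof.
  split.
  - split; [|split; [|split]].
    + split.
      * intros z Hz. eexists. apply (deriv_gen zeta_plus (RtoC 1) z Cmod_one zp_form Hz).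
      * split; [|split].
        -- apply P1_map.
        -- apply P1_onto.
        -- intros z1 z2 H1 H2. apply zp_inj; unfold Cupper, Im in *; lra.
    + apply (cont_gen zeta_plus (RtoC 1) Cmod_one zp_form).
    + apply P1_real.
    + apply P1_neg.
  - split; [|split; [|split; [|split; [|split]]]].
    + split.
      * intros z Hz. eexists. apply (deriv_gen zeta_minus (RtoC (-1)) z Cmod_mone zm_form Hz).
      * split; [|split].
        -- apply P2_map.
        -- apply P2_onto.
        -- apply P2_inj_upper.
    + apply (cont_gen zeta_minus (RtoC (-1)) Cmod_mone zm_form).
    + apply P2_pos.
    + apply P2_mid.
    + apply P2_neg.
    + apply P2_last.
Qed.
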